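(* Let $(D,D_{t'})$ be a proper pair (in the sense allowing contemporaneous effects) and let $A,C\subseteq V\cup W$ and $B\subseteq V$ be pairwise disjoint. Assume there are no tailed directed edges into $B$ in $D$. If $B$ is $\delta$-separated from $A$ given $C$ in $D$, then for every $0<t\le t'$, $\nu_t^B$ is $d$-separated from $\bar\nu_{t-1}^A$ given $\bar\nu_{t-1}^{B\cup C}$ in $D_{t'}$.
   Context: $V$, $W$ are finite disjoint sets ($W$ = baseline nodes). Tailed directed graph: graph on $V\cup W$ with directed edges $i\to j$ and tailed directed edges $i\bullet\!\!\to j$; $i\ast\!\!\to j$ means either. Only baseline nodes have edges into baseline nodes, and these are tailed. $D^-$ is the DG with $i\to j$ iff $i\ast\!\!\to j$ in $D$. DG terminology: path = walk without repeated nodes; collider = non-endpoint node with both adjacent edges pointing into it; $\mathrm{an}(C)$ = nodes with a directed path into $C$. $\delta$-separation in a DG $G$: with $G^B$ obtained by deleting all edges $i\to j$ with $i\in B$, $B$ is $\delta$-separated from $A$ given $C$ if every path in $G^B$ between $A$ and $B$ contains a noncollider in $C$ or a collider not in $\mathrm{an}_G(C)\cup C$; in a tailed directed graph $D$ this is applied to $D^-$. $d$-separation in a DAG: same blocking condition on paths of the DAG with no edge deletion. Unrolling: the unrolled version of $D$ on $t'$ lags is the DAG $D_{t'}$ on nodes $\bigcup_{i\in V}\{\nu_0^i,\dots,\nu_{t'}^i\}\cup\{\nu_0^i:i\in W\}$ with $\nu_s^i\to\nu_t^j$ if $s<t$ and $i\ast\!\!\to j$, and $\nu_t^i\to\nu_t^j$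 if $i\bullet\!\!\to j$. Rolling: the rolled version of a DAG $D_{t'}$ on such a node set has $i\ast\!\!\to j$ if $\nu_s^i\to\nu_t^j$ for some $s\le t$, and $i\bullet\!\!\to j$ iff $\nu_t^i\to\nu_t^j$ for some $t$. Standing assumption: if $\nu_t^i\to\nu_t^j$ is present then so is $\nu_s^i\to\nu_u^j$ for some $s<u$. $(D,D_{t'})$ is proper if $D$ is the rolled version of $D_{t'}$ or $D_{t'}$ is the unrolled version of $D$. $\nu_t^A=\{\nu_t^i:i\in A\}$, $\bar\nu_t^A=\{\nu_s^i:i\in A,s\le t\}$. *)

(* Defs.v *)
From mathcomp Require Import all_boot.
Set Implicit Arguments. Unset Strict Implicit. Unset Printing Implicit Defensive.

Section Walks.
Variable T : finType.

(* A walk from x is a start node x and a list of steps (b, y):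
   b = true  : the step uses an edge  x -> y   (forward),
   b = false : the step uses an edge  y -> x   (backward).
   Recording the orientation makes the walk determine its edges
   (a DG may contain both i -> j and j -> i). *)
Fixpoint is_walk (e : rel T) (x : T) (s : seq (bool * T)) : bool :=
  if s is (b, y) :: s' then (if b then e x y else e y x) && is_walk e y s'
  else true.

Definition walk_nodes (x : T) (s : seq (bool * T)) : seq T := x :: map snd s.
Definition walk_end (x : T) (s : seq (bool * T)) : T := last x (map snd s).

Definition is_path (e : rel T) (x : T) (s : seq (bool * T)) : bool :=
  is_walk e x s && uniq (walk_nodes x s).

Definition anc (e : rel T) (C : {set T}) : {set T} :=
  [set x | [exists c in C, connect e x c]].

(* blocked_tail C AnC bin x s: x is a non-endpoint node entered by a step
   of orientation bin (bin = true: previous -> x) and left by the first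
   step of s; returns true iff some non-endpoint node from x on is a
   noncollider in C or a collider not in AnC. *)
Fixpoint blocked_tail (C AnC : {set T}) (bin : bool) (x : T)
    (s : seq (bool * T)) : bool :=
  if s is (b, y) :: s' then
    (if bin && ~~ b (* both adjacent edges point into x: collider *)
     then x \notin AnC else x \in C) || blocked_tail C AnC b y s'
  else false (* x is the final endpoint *).

Definition blocked (C AnC : {set T}) (x : T) (s : seq (bool * T)) : bool :=
  if s is (b, y) :: s' then blocked_tail C AnC b y s' else false.

Definition sep_gen (ep ea : rel T) (A B C : {set T}) : Prop :=
  forall (x : T) (s : seq (bool * T)),
    is_path ep x s -> x \in A -> walk_end x s \in B ->
    blocked C (anc ea C :|: C) x s.

Definition d_separated (e : rel T) (A B C : {set T}) : Prop :=
  sep_gen e e A B C.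

(* delta-separation in a DG e: paths taken in e^B (edges out of B deleted),
   ancestors taken in e *)
Definition delta_separated (e : rel T) (A B C : {set T}) : Prop :=
  sep_gen [rel i j | e i j && (i \notin B)] e A B C.

End Walks.

(* Nodes V u W form the finite type N, W : {set N} are the baseline   *)
(* nodes, V = ~: W.  A tailed directed graph D is given by            *)
(*   E  i j  <->  i *-> j   (so D^- = E)                             *)
(*   Tl i j  <->  i .-> j   (tailed edge)                             *)
Section TimeSeries.
Variables (N : finType) (W : {set N}) (tp : nat).

(* unrolled nodes nu_t^i, t in {0..tp}; only (i,0) is a node for i in W *)
Definition node : finType := (N * 'I_tp.+1)%type.
Definition valid (u : node) : bool := (u.1 \notin W) || (val u.2 == 0%N).

Definition is_TDG (E Tl : rel N) : Prop :=
  (forall i j, Tl i j -> E i j) /\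
  (forall i j, j \in W -> E i j -> (i \in W) && Tl i j).

Definition unrolled (E Tl : rel N) (G : rel node) : Prop :=
  forall u v : node,
    G u v = [&& valid u, valid v &
               ((val u.2 < val v.2) && E u.1 v.1)
               || ((val u.2 == val v.2) && Tl u.1 v.1)].

Definition rolled (G : rel node) (E Tl : rel N) : Prop :=
  forall i j : N,
    (E i j = [exists s : 'I_tp.+1, exists t : 'I_tp.+1,
                (val s <= val t) && G (i, s) (j, t)]) /\
    (Tl i j = [exists t : 'I_tp.+1, G (i, t) (j, t)]).

Definition acyclic (G : rel node) : Prop :=
  forall u v, G u v -> ~~ connect G v u.

Definition ts_dag (G : rel node) : Prop :=
  acyclic G /\
  (forall u v, G u v -> [&& valid u, valid v & val u.2 <= val v.2]).

(* standing assumption (for targets j in V, where it can be met) *)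
Definition standing (G : rel node) : Prop :=
  forall (i j : N) (t : 'I_tp.+1), j \notin W -> G (i, t) (j, t) ->
    exists s u : 'I_tp.+1, val s < val u /\ G (i, s) (j, u).

Definition proper_pair (E Tl : rel N) (G : rel node) : Prop :=
  [/\ is_TDG E Tl, ts_dag G, standing G & (rolled G E Tl \/ unrolled E Tl G)].

Definition nu (t : nat) (A : {set N}) : {set node} :=
  [set u : node | [&& u.1 \in A, val u.2 == t & valid u]].

Definition barnu (t : nat) (A : {set N}) : {set node} :=
  [set u : node | [&& u.1 \in A, val u.2 <= t & valid u]].

End TimeSeries.

(* Main.v *)
Require Import Defs.
From mathcomp Require Import all_boot.
Set Implicit Arguments. Unset Strict Implicit. Unset Printing Implicit Defensive.

Section Gen.
Variable T : finType.
Implicit Types (C AnC : {set T}).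

Definition open_tail (C AnC : {set T}) bin (x : T) s := ~~ blocked_tail C AnC bin x s.
Definition cond (C AnC : {set T}) (bin b : bool) (x : T) :=
  if bin && ~~ b then x \in AnC else x \notin C.

Arguments open_tail : simpl never.
Arguments cond : simpl never.

Lemma open_cons C AnC bin x b y s :
  open_tail C AnC bin x ((b,y)::s) = cond C AnC bin b x && open_tail C AnC b y s.
Proof. by rewrite /open_tail /cond /= negb_or; case: (bin && ~~ b); rewrite ?negbK. Qed.

Lemma open_nil C AnC bin x : open_tail C AnC bin x [::].
Proof. by []. Qed.

Lemma open_start C AnC x s : ~~ blocked C AnC x s -> x \notin C -> open_tail C AnC false x s.
Proof. case: s => [|[b y] s] //= H Hx. by rewrite /open_tail /= negb_or Hx. Qed.

Lemma start_open C AnC bin x s : open_tail C AnC bin x s -> ~~ blocked C AnC x s.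
Proof. case: s => [|[b y] s] //=. by rewrite open_cons => /andP[]. Qed.

Lemma anc_refl (e : rel T) C x : x \in C -> x \in anc e C.
Proof. by move=> Hx; rewrite inE; apply/existsP; exists x; rewrite Hx connect0. Qed.

Lemma anc_conn (e : rel T) C x y : connect e x y -> y \in anc e C -> x \in anc e C.
Proof.
move=> exy; rewrite !inE => /existsP[c /andP[Hc Hyc]]; apply/existsP; exists c.
by rewrite Hc /=; apply: connect_trans exy Hyc.
Qed.

Lemma anc_step (e : rel T) C x y : e x y -> y \in anc e C -> x \in anc e C.
Proof. by move=> exy; apply: anc_conn (connect1 exy). Qed.

Lemma run (e ea : rel T) C s y : subrel e ea -> is_walk e y s ->
  open_tail C (anc ea C :|: C) true y s -> has (fun p => ~~ p.1) s -> y \in anc ea C.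
Proof.
move=> sub; elim: s y => [//|[b z] s IH] y; rewrite open_cons /cond.
case: b => /=.
- move=> /andP[eyz ws] /andP[_ os] hs; exact: anc_step (sub _ _ eyz) (IH _ ws os hs).
- move=> _ /andP[H _] _; move: H; rewrite inE => /orP[//|]; exact: anc_refl.
Qed.

Lemma walk_split (x y : T) s : x \in walk_nodes y s ->
  exists pre suf, s = pre ++ suf /\ walk_end y pre = x.
Proof.
elim: s y => [|[c z] s IH] y; rewrite /walk_nodes /= in_cons.
- by rewrite orbF => /eqP->; exists [::], [::].
- case/orP => [/eqP-> | H]; first by exists [::], ((c,z)::s).
  have [pre [suf [-> <-]]] := IH z H. by exists ((c,z)::pre), suf.
Qed.

Lemma walk_cat (e : rel T) y pre suf : is_walk e y (pre ++ suf) -> is_walk e (walk_end y pre) suf.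
Proof. elim: pre y => [//|[c z] pre IH] y /= /andP[_ H]; exact: IH. Qed.

Lemma end_cat (y : T) pre suf : walk_end y (pre ++ suf) = walk_end (walk_end y pre) suf.
Proof. by rewrite /walk_end map_cat last_cat. Qed.

Lemma open_cat C AnC b y pre suf : open_tail C AnC b y (pre ++ suf) ->
  open_tail C AnC (last b (map fst pre)) (walk_end y pre) suf.
Proof. elim: pre b y => [//|[c z] pre IH] b y /=; rewrite open_cons => /andP[_ H]; exact: IH. Qed.

Lemma last_false b (pre : seq (bool * T)) : last b (map fst pre) = false -> b = true ->
  has (fun p : bool * T => ~~ p.1) pre.
Proof.
elim: pre b => [|[c z] pre IH] b /=; first by move=> ->.
by case: c => //= H _; exact: IH H erefl.
Qed.

Lemma cond_combine C AnC bin b b' bi x : cond C AnC bin b x -> cond C AnC bi b' x ->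
  (bin -> b -> ~~ b' -> ~~ bi -> x \in AnC) -> cond C AnC bin b' x.
Proof. by rewrite /cond; case: bin; case: b; case: b'; case: bi => //= H1 H2 H3; apply: H3. Qed.

Lemma wp (e ea : rel T) C (B : {set T}) s x bin : subrel e ea -> is_walk e x s ->
  walk_end x s \in B -> open_tail C (anc ea C :|: C) bin x s ->
  exists s', [/\ is_walk e x s', walk_end x s' \in B, uniq (walk_nodes x s')
             & open_tail C (anc ea C :|: C) bin x s'].
Proof.
move=> sub; elim: s x bin => [|[b y] s IH] x bin.
  by move=> _ h1 _; exists [::].
move=> /= /andP[exy ws] hend; rewrite open_cons => /andP[cx os].
have [s1 [ws1 e1 u1 o1]] := IH y b ws hend os.
case: (boolP (x \in walk_nodes y s1)) => xin; last first.
  exists ((b,y)::s1); split.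
  - by rewrite /= exy.
  - exact: e1.
  - by rewrite /walk_nodes /= -/(walk_nodes y s1) xin.
  - by rewrite open_cons cx.
have [pre [suf [def1 dx]]] := walk_split xin.
subst s1; exists suf; split.
- by rewrite -dx; apply: walk_cat.
- by rewrite -dx -end_cat.
- move: u1; rewrite /walk_nodes map_cat -cat_cons cat_uniq => /and3P[_ hn us].
  rewrite /= us andbT; apply: contra hn => xs; apply/hasP; exists x => //.
  by rewrite -dx; exact: mem_last.
- have oc := open_cat o1; rewrite dx in oc.
  clear xin; case: suf ws1 e1 o1 oc u1 => [|[b' z] suf] ws1 e1 o1 oc u1; first exact: open_nil.
  rewrite open_cons in oc; case/andP: oc => oc1 oc2.
  rewrite open_cons oc2 andbT.
  set bi := last b (map fst pre) in oc1.
  have extra : bin -> b -> ~~ b' -> ~~ bi -> x \in anc ea C :|: C.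
    move=> _ hb _ hbi; rewrite inE; apply/orP; left.
    have exy' : e x y by move: hb exy; case: (b).
    have o1' : open_tail C (anc ea C :|: C) true y (pre ++ (b', z) :: suf) by move: hb o1; case: (b).
    apply: anc_step (sub _ _ exy') (run sub ws1 o1' _).
    by rewrite has_cat (last_false (negbTE hbi)).
  exact: cond_combine cx oc1 extra.
Qed.

End Gen.

Section Fix.
Variables (T : finType) (E : rel T) (B C : {set T}).
Let EB := [rel i j | E i j && (i \notin B)].

Lemma dp p x bin : path E x p -> last x p \in B -> x \notin anc E C ->
  exists s, [/\ is_walk EB x s, walk_end x s \in B & open_tail C (anc E C :|: C) bin x s].
Proof.
elim: p x bin => [|y p IH] x bin /=; first by move=> _ hx _; exists [::].
case/andP=> exy hp hl hnx.
case: (boolP (x \in B)) => xB; first by exists [::].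
have hny : y \notin anc E C by apply: contra hnx; apply: anc_step.
have [s [ws es os]] := IH y true hp hl hny.
exists ((true,y)::s); split => //=; first by rewrite exy xB.
rewrite open_cons os andbT /cond andbF.
by apply: contra hnx; apply: anc_refl.
Qed.

Lemma fixw s x bin : is_walk EB x s -> walk_end x s \in B ->
  open_tail (B :|: C) (anc E (B :|: C)) bin x s ->
  exists s', [/\ is_walk EB x s', walk_end x s' \in B & open_tail C (anc E C :|: C) bin x s'].
Proof.
elim: s x bin => [|[b y] s IH] x bin; first by move=> _ h _; exists [::].
move=> /= /andP[exy ws] hend; rewrite open_cons => /andP[cx os].
have [s1 [ws1 e1 o1]] := IH y b ws hend os.
have keep : cond C (anc E C :|: C) bin b x ->
  exists s', [/\ is_walk EB x s', walk_end x s' \in B & open_tail C (anc E C :|: C) bin x s'].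
  by move=> c; exists ((b,y)::s1); split => //=; [rewrite exy | rewrite open_cons c].
move: cx; rewrite /cond; case: ifP => hcol hx; last first.
  by apply: keep; rewrite /cond hcol; move: hx; rewrite inE negb_or => /andP[].
case: (boolP (x \in anc E C :|: C)) => hxa; first by apply: keep; rewrite /cond hcol.
case: (boolP (x \in B)) => xB; first by exists [::].
move: hx; rewrite inE => /existsP[c /andP[]]; rewrite inE => /orP[cB|cC] hc; last first.
  by move: hxa; rewrite inE (anc_conn hc (anc_refl E cC)).
have hnx : x \notin anc E C by move: hxa; rewrite inE negb_or => /andP[].
case/connectP: hc => p hp hl.
by apply: dp hp _ hnx; rewrite -hl.
Qed.

End Fix.

Section TS.
Variables (N : finType) (W : {set N}) (tp : nat) (E Tl : rel N) (G : rel (node N tp)).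
Variables (B C : {set N}) (t : nat).
Hypothesis hGE : forall u v, G u v -> E u.1 v.1.
Hypothesis hGT : forall u v, G u v -> val u.2 = val v.2 -> Tl u.1 v.1.
Hypothesis hGle : forall u v, G u v -> [&& valid W u, valid W v & val u.2 <= val v.2].
Hypothesis ht : 0 < t.
Hypothesis noTl : forall i j, j \in B -> ~~ Tl i j.

Let Z := barnu W tp t.-1 (B :|: C).
Let AnZ := anc G Z :|: Z.
Let EB := [rel i j | E i j && (i \notin B)].

Lemma Gtime u v : G u v -> val u.2 <= val v.2.
Proof. by move=> h; case/and3P: (hGle h). Qed.

Lemma connect_time u v : connect G u v -> val u.2 <= val v.2.
Proof.
case/connectP => p; elim: p u => [|w p IH] u /=; first by move=> _ ->.
case/andP => guw pw lv; apply: leq_trans (IH _ pw lv); exact: Gtime.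
Qed.

Lemma connect_proj u v : connect G u v -> connect E u.1 v.1.
Proof.
case/connectP => p; elim: p u => [|w p IH] u /=; first by move=> _ ->.
case/andP => guw pw lv; apply: connect_trans (IH _ pw lv); exact: connect1 (hGE guw).
Qed.

Lemma Z_time u : u \in Z -> val u.2 <= t.-1.
Proof. by rewrite inE => /and3P[]. Qed.

Lemma AnZ_time u : u \in AnZ -> val u.2 <= t.-1.
Proof.
rewrite inE => /orP[|]; last exact: Z_time.
rewrite inE => /existsP[z /andP[hz huz]]; apply: leq_trans (connect_time huz) (Z_time hz).
Qed.

Lemma AnZ_proj u : u \in AnZ -> u.1 \in anc E (B :|: C).
Proof.
rewrite inE => /orP[|].
  rewrite !inE => /existsP[z /andP[hz huz]]; apply/existsP; exists z.1.
  by move: hz; rewrite inE => /and3P[-> _ _]; rewrite (connect_proj huz).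
by rewrite inE => /and3P[h _ _]; apply: anc_refl.
Qed.

Lemma notZ u : u \notin Z -> val u.2 <= t.-1 -> valid W u -> u.1 \notin B :|: C.
Proof. by move=> h ht1 hv; apply: contra h => hu; rewrite inE hu ht1 hv. Qed.

Lemma tlt : t.-1 < t. Proof. by case: t ht. Qed.

Lemma up s y p : G p y -> t <= val p.2 -> is_walk G y s -> open_tail Z AnZ true y s ->
  walk_end y s \in nu W tp t B -> False.
Proof.
elim: s y p => [|[b z] s IH] y p gpy hp.
  move=> _ _; rewrite /walk_end /= inE => /and3P[yB /eqP yt _].
  have e : val p.2 = val y.2 by apply/eqP; rewrite eqn_leq Gtime // yt.
  by move: (noTl p.1 yB); rewrite hGT.
rewrite open_cons /cond; case: b => /=.
  move=> /andP[gyz ws] /andP[_ os] he; apply: IH gyz _ ws os he.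
  exact: leq_trans hp (Gtime gpy).
move=> _ /andP[hy _] _.
have := leq_trans (leq_trans hp (Gtime gpy)) (AnZ_time hy).
by rewrite leqNgt tlt.
Qed.

Lemma proj s x bin : is_walk G x s -> open_tail Z AnZ bin x s ->
  walk_end x s \in nu W tp t B -> val x.2 <= t.-1 -> valid W x ->
  [/\ is_walk EB x.1 (map (fun p => (p.1, p.2.1)) s),
      walk_end x.1 (map (fun p => (p.1, p.2.1)) s) \in B &
      open_tail (B :|: C) (anc E (B :|: C)) bin x.1 (map (fun p => (p.1, p.2.1)) s)].
Proof.
elim: s x bin => [|[b y] s1 IH] x bin.
  move=> _ _; rewrite /walk_end /= inE => /and3P[_ /eqP -> _].
  by rewrite leqNgt tlt.
move=> /= /andP[gxy ws] ocx hend hx vx; move: ocx; rewrite (@open_cons _ Z AnZ) => /andP[cx os].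
have {hend}hend : walk_end y s1 \in nu W tp t B by exact: hend.
have cxD : cond (B :|: C) (anc E (B :|: C)) bin b x.1.
  move: cx; rewrite /cond; case: ifP => _; first exact: AnZ_proj.
  by move=> h; exact: notZ h hx vx.
have ncB : ~~ (bin && ~~ b) -> x.1 \notin B.
  move=> h; move: cxD; rewrite /cond (negbTE h) inE negb_or; by case/andP.
have vy : valid W y by case: (b) gxy => /hGle /and3P[].
case: s1 IH ws os hend => [|[b2 z] s2] IH ws os hend.
  move: hend; rewrite /walk_end /= inE => /and3P[yB /eqP yt _].
  case: b gxy cx os cxD ncB => gxy cx os cxD ncB.
    split => //=; last by rewrite open_cons cxD.
    by rewrite (hGE gxy) ncB // andbF.
  have := leq_trans (Gtime gxy) hx; by rewrite yt leqNgt tlt.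
have hy : val y.2 <= t.-1.
  case: b gxy cx os cxD ncB => gxy cx os cxD ncB; last exact: leq_trans (Gtime gxy) hx.
  rewrite leqNgt; apply/negP => hty.
  have hty' : t <= val y.2 by move: hty; case: (t) ht.
  clear IH; move: os; rewrite (@open_cons _ Z AnZ) /cond; move: hend; case: b2 ws => /= ws hend.
    case/andP: ws => gyz ws /andP[_ os]; exact: up gyz hty' ws os hend.
  move=> /andP[hyz _]; have := AnZ_time hyz; by rewrite leqNgt (leq_trans tlt hty').
have [wD eD oD] := IH y b ws os hend hy vy.
split => //; last by rewrite open_cons cxD.
apply/andP; split; last exact: wD.
case: b gxy cx os cxD ncB wD eD oD => gxy cx os cxD ncB _ _ _.
  by rewrite (hGE gxy) ncB // andbF.
rewrite (hGE gxy) /=.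
move: os; rewrite open_cons /cond /= => /andP[h _].
by move: (notZ h (leq_trans (Gtime gxy) hx) vy); rewrite inE negb_or => /andP[].
Qed.

End TS.
Unset Implicit Arguments.

Theorem corollary2 (N : finType) (W : {set N}) (tp : nat)
  (E Tl : rel N) (G : rel (node N tp)) (A B C : {set N}) :
  proper_pair W E Tl G ->
  [disjoint B & W] ->
  [disjoint A & B] -> [disjoint A & C] -> [disjoint B & C] ->
  (forall i j : N, j \in B -> ~~ Tl i j) ->
  delta_separated E A B C ->
  forall t : nat, 0 < t <= tp ->
    d_separated G (barnu W tp t.-1 A) (nu W tp t B) (barnu W tp t.-1 (B :|: C)).
Proof.
move=> [[hTE hTW] [_ hle] _ hroll] _ dAB dAC _ noTl dsep t /andP[t0 _].
have hGE : forall u v, G u v -> E u.1 v.1.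
  case: hroll => [hR|hU] [i s] [j s'] /= g.
    rewrite (proj1 (hR i j)); apply/existsP; exists s; apply/existsP; exists s'.
    by rewrite g andbT; case/and3P: (hle _ _ g).
  move: g; rewrite hU => /and3P[_ _ /orP[/andP[_ //]|/andP[_ h]]]; exact: hTE.
have hGT : forall u v, G u v -> val u.2 = val v.2 -> Tl u.1 v.1.
  case: hroll => [hR|hU] [i s] [j s'] /= g hs;
    have es : s = s' by apply: val_inj.
    subst s'; rewrite (proj2 (hR i j)); apply/existsP; by exists s.
  subst s'; by move: g; rewrite hU ltnn eqxx /= => /and3P[_ _].
move=> x s /andP[ws us] hx hend.
case: (boolP (blocked _ _ x s)) => // nb; exfalso.
have hxA : x.1 \in A by move: hx; rewrite inE => /and3P[].
have hxt : val x.2 <= t.-1 by move: hx; rewrite inE => /and3P[].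
have hxv : valid W x by move: hx; rewrite inE => /and3P[].
have xBC : x.1 \notin B :|: C.
  by rewrite inE negb_or (disjointFr dAB hxA) (disjointFr dAC hxA).
have xZ : x \notin barnu W tp t.-1 (B :|: C) by rewrite inE (negbTE xBC).
have ox := open_start nb xZ.
have [wD eD oD] := proj hGE hGT hle t0 noTl ws ox hend hxt hxv.
have [s2 [w2 e2 o2]] := fixw wD eD oD.
have sub : subrel [rel i j | E i j && (i \notin B)] E by move=> i j /andP[].
have [s3 [w3 e3 u3 o3]] := wp sub w2 e2 o2.
have := dsep x.1 s3 _ hxA e3.
by rewrite /is_path w3 u3 (negbTE (start_open o3)) => /(_ isT).
Qed.
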